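(* Let $X=[0,1]$ with the Euclidean metric, $T(x)=2x \bmod 1$, and $\mu$ Lebesgue measure. Let $(r_n)_n$ be a sequence of positive numbers with $n^2r_n\to0$. Then $(\mu\times\mu)(\liminf_n E_{n,r_n}^T)=0$.
   Context: For $n\in\mathbb{N}$ and $r>0$, $E_{n,r}^{T}:=\{(x,y)\in X\times X : |T^i x- T^j y|<r \text{ for some } 0\le i,j<n\}$; $E_{n,r_n}^T$ is this set with $r=r_n$. *)

(* Defs.v *)
From HB Require Import structures.
From mathcomp Require Import all_boot all_order all_algebra.
From mathcomp Require Import all_classical all_reals all_analysis.
Set Implicit Arguments. Unset Strict Implicit. Unset Printing Implicit Defensive.
Import Order.TTheory GRing.Theory Num.Theory.
Local Open Scope classical_set_scope.
Local Open Scope ring_scope.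

Definition doubling {R : realType} (x : R) : R := 2 * x - (Num.floor (2 * x))%:~R.

(* E_{n,r}^T as a subset of X x X, with X = [0,1] viewed inside R * R *)
Definition Eset {R : realType} (T : R -> R) (n : nat) (r : R) : set (R * R) :=
  [set p | p.1 \in `[0, 1] /\ p.2 \in `[0, 1] /\
     exists i j : nat, (i < n)%N /\ (j < n)%N /\
       `|iter i T p.1 - iter j T p.2| < r].

Definition set_liminf {U : Type} (E : nat -> set U) : set U :=
  \bigcup_(N in [set: nat]) \bigcap_(n in [set k | (N <= k)%N]) E n.

(* Main.v *)
Require Import Defs.
From HB Require Import structures.
From mathcomp Require Import all_boot all_order all_algebra.
From mathcomp Require Import all_classical all_reals all_analysis.
From mathcomp Require Import ring lra zify.
Import Order.TTheory GRing.Theory Num.Theory numFieldNormedType.Exports.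
Local Open Scope classical_set_scope.
Local Open Scope ring_scope.

Section H.
Variable R : realType.
Local Notation lam := (@lebesgue_measure R).

Lemma lam_mono (A B : set R) : A `<=` B -> (lam A <= lam B)%E.
Proof.
move=> AB; exact: (@le_mu_ext _ (ocitv_type R) R (wlength idfun) A B AB).
Qed.

Lemma lam_U2 (A B : set R) : (lam (A `|` B) <= lam A + lam B)%E.
Proof.
exact: (@outer_measureU2 _ _ (mu_ext (wlength (R:=R) idfun)) A B).
Qed.

Lemma lam_sub (F : nat -> set R) :
  (lam (\bigcup_n F n) <= \sum_(0 <= n <oo) lam (F n))%E.
Proof.
exact: (@outer_measure_sigma_subadditive _ _ (mu_ext (wlength (R:=R) idfun)) F).
Qed.

Lemma lam_fin (F : nat -> set R) n (b : R) :
  (forall i, (i < n)%N -> (lam (F i) <= b%:E)%E) ->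
  (lam [set y | exists2 i, (i < n)%N & F i y] <= (n%:R * b)%:E)%E.
Proof.
elim: n => [|n IH] H.
  rewrite mul0r (_ : [set y | _] = set0); first by rewrite measure0.
  by apply/seteqP; split => y //= [].
apply: (@le_trans _ _ (lam ([set y | exists2 i, (i < n)%N & F i y] `|` F n)));
  first apply: lam_mono.
  move=> y [i]; rewrite ltnS leq_eqVlt => /orP[/eqP ->|hi] Fi; [by right|by left; exists i].
apply: (le_trans (lam_U2 _ _)).
rewrite -natr1 mulrDl mul1r EFinD leeD //; first by apply: IH => i hi; apply: H; apply: ltnW.
exact: H.
Qed.

Lemma lam_itv (c d : R) : c <= d -> (lam `]c, d[ <= (d - c)%:E)%E.
Proof.
move=> cd; rewrite lebesgue_measure_itv /=.
case: ifP => _; first by rewrite -EFinB.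
by rewrite lee_fin subr_ge0.
Qed.
End H.
Section D.
Variable R : realType.

Lemma doub_range (z : R) : 0 <= doubling z < 1.
Proof.
rewrite /doubling; have /andP[h1 h2] := floor_itv (2 * z).
rewrite intrD in h2; apply/andP; split; lra.
Qed.

Lemma iter_range j (y : R) : 0 <= y <= 1 -> 0 <= iter j doubling y <= 1.
Proof.
case: j => [//|j] _; rewrite iterS; have /andP[h1 h2] := doub_range (iter j doubling y).
apply/andP; split; lra.
Qed.

Lemma iter_form j (y : R) : exists k : int, iter j doubling y = 2 ^+ j * y - k%:~R.
Proof.
elim: j => [|j [k IH]]; first by exists 0; rewrite expr0 mul1r subr0.
exists (k + k + Num.floor (2 * iter j doubling y)).
rewrite iterS /doubling !intrD IH exprS; lra.
Qed.

Lemma cover j (y a r : R) : 0 <= y <= 1 -> `|a - iter j doubling y| < r ->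
  exists2 t, (t < 2 ^ j + 2)%N &
    y \in `](a + t%:R - 1 - r) / 2 ^+ j, (a + t%:R - 1 + r) / 2 ^+ j[.
Proof.
move=> hy; have [k hk] := iter_form j y.
have /andP[h1 h2] := iter_range j y hy.
rewrite ltr_norml => /andP[h3 h4].
have P0 : 0 < (2 : R) ^+ j by apply: exprn_gt0.
move: hy => /andP[hy0 hy1].
have hP : 2 ^+ j * y <= 2 ^+ j by rewrite -{2}(mulr1 (2 ^+ j)); apply: ler_wpM2l => //; apply: ltW.
have hP0 : 0 <= 2 ^+ j * y by apply: mulr_ge0 => //; apply: ltW.
have hk1 : (-2 < k)%R.
  rewrite -(ltr_int R) rmorphN /= rmorph_nat; rewrite hk in h1, h2; lra.
have hk2 : (0 <= k + 1)%R by lia.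
have ht : ((absz (k + 1)%R)%:R : R) = k%:~R + 1 by rewrite natr_absz ger0_norm // intrD.
exists (absz (k + 1)%R).
  rewrite -(ltr_nat R) ht natrD natrX; rewrite hk in h1; lra.
rewrite in_itv /= ltr_pdivrMr // ltr_pdivlMr // ht; apply/andP; split;
  rewrite hk in h3 h4; lra.
Qed.
End D.

Section M.
Variable R : realType.
Local Notation lam := (@lebesgue_measure R).

Lemma secbound n (r x : R) : 0 < r ->
  (lam (xsection (Eset doubling n r) x) <= (n%:R * (n%:R * (6 * r)))%:E)%E.
Proof.
move=> r0.
pose I i j t := `](iter i doubling x + t%:R - 1 - r) / 2 ^+ j,
                  (iter i doubling x + t%:R - 1 + r) / 2 ^+ j[%classic : set R.
pose H i j := [set y | exists2 t, (t < 2 ^ j + 2)%N & I i j t y].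
pose G i := [set y | exists2 j, (j < n)%N & H i j y].
apply: (@le_trans _ _ (lam [set y | exists2 i, (i < n)%N & G i y])).
  apply: lam_mono => y; rewrite /xsection /= in_setE /Eset /=.
  move=> [_ [hy [i [j [hi [hj hij]]]]]].
  exists i => //; exists j => //.
  move: hy; rewrite in_itv /= => hy.
  have [t ht ity] := @cover R j y (iter i doubling x) r hy hij.
  by exists t.
apply: (@lam_fin R G n) => i hi.
rewrite /G.
apply: (@lam_fin R (H i) n) => j hj.
have P0 : 0 < (2 : R) ^+ j by apply: exprn_gt0.
have P1 : 1 <= (2 : R) ^+ j by apply: exprn_ege1; lra.
apply: (@le_trans _ _ ((2 ^ j + 2)%:R * (2 * r / 2 ^+ j))%:E).
  rewrite /H; apply: (@lam_fin R (I i j)) => t ht; rewrite /I; apply: (le_trans (@lam_itv R _ _ _)).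
    by rewrite ler_pM2r ?invr_gt0 //; lra.
  by rewrite lee_fin -mulrBl ler_pM2r ?invr_gt0 //; lra.
rewrite lee_fin natrD natrX mulrDl.
have -> : (2 ^+ j : R) * (2 * r / 2 ^+ j) = 2 * r by field; lra.
have : 2%:R * (2 * r / 2 ^+ j) <= 2 * (2 * r).
  apply: ler_wpM2l => //; rewrite ler_pdivrMr //; nra.
lra.
Qed.
End M.

Theorem mainTheorem6 (R : realType) (r : nat -> R)
  (hpos : forall n, 0 < r n)
  (hlim : (fun n : nat => n%:R ^+ 2 * r n : R) @ \oo --> 0) :
  ((@lebesgue_measure R \x @lebesgue_measure R)
     (set_liminf (fun n => Eset doubling n (r n))) = 0)%E.
Proof.
set L := set_liminf _.
have hc : (fun n : nat => 6 * (n%:R ^+ 2 * r n)) @ \oo --> (0 : R).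
  rewrite -(mulr0 6); apply: cvgM => //; exact: cvg_cst.
have B0 : forall x N, lebesgue_measure
    (\bigcap_(n in [set k | (N <= k)%N]) xsection (Eset doubling n (r n)) x) = 0%E.
  move=> x N; set m := lebesgue_measure _.
  have m0 : (0 <= m)%E by apply: measure_ge0.
  have mle : forall n, (N <= n)%N -> (m <= (6 * (n%:R ^+ 2 * r n))%:E)%E.
    move=> n hn; apply: (le_trans (@lam_mono R _ (xsection (Eset doubling n (r n)) x) _)).
      by move=> y; apply.
    apply: (le_trans (@secbound R n (r n) x (hpos n))).
    by rewrite lee_fin le_eqVlt; apply/orP; left; apply/eqP; ring.
  have fm : m \is a fin_num.
    by rewrite ge0_fin_numE //; apply: (le_lt_trans (mle N (leqnn N))); rewrite ltry.
  apply/eqP; rewrite eq_le m0 andbT -(fineK fm) lee_fin.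
  rewrite -(cvg_lim _ hc) //; apply: limr_ge; first by apply/cvg_ex; exists 0.
  exists N => // n /= hn; rewrite -lee_fin fineK //; exact: mle.
have H0 : forall x, lebesgue_measure (xsection L x) = 0%E.
  move=> x; apply/eqP; rewrite eq_le measure_ge0 andbT.
  apply: (le_trans (@lam_mono R _ (\bigcup_N \bigcap_(n in [set k | (N <= k)%N])
     xsection (Eset doubling n (r n)) x) _)).
    move=> y; rewrite /xsection /= in_setE => -[N _ hN]; exists N => // n hn.
    by rewrite /= in_setE; apply: hN.
  apply: (le_trans (@lam_sub R _)).
  by rewrite eseries0 // => i _ _; apply: B0.
rewrite /product_measure1.
rewrite (_ : (fun x => _) = cst 0%E); first exact: integral0.
by apply/funext => x /=; apply: H0.
Qed.
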